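(* Let $(X,G)$ be a free exact $G$-odometer determined by a decreasing sequence $\{G_n\}_{n\ge0}$ of finite-index normal subgroups of $G$. Then: (1) for each $n$, the group $[[G]]_n$ is isomorphic to a semidirect product $G_n^{[G:G_n]}\rtimes S_{[G:G_n]}$, where $S_p$ denotes the symmetric group on $p$ letters (the normal factor $G_n^{[G:G_n]}$ corresponding to the elements of $[[G]]_n$ that leave each atom of $\mathcal P_n$ invariant, and $S_{[G:G_n]}$ to the permutation of the atoms of $\mathcal P_n$); (2) the topological full group $[[G]]$ is the increasing union (inductive limit) of these groups $[[G]]_n\cong G_n^{[G:G_n]}\rtimes S_{[G:G_n]}$.
   Context: Exact $G$-odometer: for a decreasing sequence of finite-index normal subgroups $G_n$ of $G$, the inverse limit $X=\varprojlim(G/G_n,\pi_n)$ under the natural quotient maps, with $G$ acting by left multiplication coordinatewise. $C_n$ is the set of $x=(x_k)\in X$ with $x_n=G_n$, and $\mathcal P_n=\{f\cdot C_n:f\in F_n\}$ for a set $F_n$ of representatives of $G/G_n$, a clopen partition of $X$. Topological full group $[[G]]$: all homeomorphisms $s$ of $X$ such that every $x$ has a clopen neighborhood $U$ and some $g\in G$ with $s=g$ on $U$. For $\gamma\in[[G]]$, $f(\gamma,x)\in G$ is the unique element with $f(\gamma,x)\cdot x=\gamma\cdot x$; $[[G]]_n$ is the subgroup of $\gamma\in[[G]]$ with $f(\gamma,\cdot)$ constant on each atom of $\mathcal P_n$. *)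

(* Defs.v *)
From mathcomp Require Import all_boot all_fingroup.
Unset Printing Implicit Defensive.

Record AbsGroup := {
  gcar :> Type;
  gmul : gcar -> gcar -> gcar;
  gone : gcar;
  ginv : gcar -> gcar;
  gmulA : forall a b c, gmul a (gmul b c) = gmul (gmul a b) c;
  gmul1l : forall a, gmul gone a = a;
  gmul1r : forall a, gmul a gone = a;
  gmulVl : forall a, gmul (ginv a) a = gone;
  gmulVr : forall a, gmul a (ginv a) = gone }.
Arguments gmul {a0}. Arguments ginv {a0}.

Section Odometer.
Variable G : AbsGroup.
Local Notation "a ** b" := (gmul a b) (at level 40, left associativity).

Definition is_subgrp (H : G -> Prop) : Prop :=
  H (gone G) /\ (forall a b, H a -> H b -> H (a ** b)) /\ (forall a, H a -> H (ginv a)).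

Definition is_normal_sub (H : G -> Prop) : Prop :=
  forall g h, H h -> H (g ** h ** ginv g).

(* e : 'I_p -> G is a set of representatives of G/H (so [G:H] = p) *)
Definition is_coset_reps (H : G -> Prop) (p : nat) (e : 'I_p -> G) : Prop :=
  (forall g, exists i, H (ginv (e i) ** g)) /\
  (forall i j, H (ginv (e i) ** e j) -> i = j).

Definition finite_index (H : G -> Prop) : Prop :=
  exists p (e : 'I_p -> G), is_coset_reps H p e.

Definition odo_coset (H : G -> Prop) (a : G) : G -> Prop := fun h => H (ginv a ** h).
Definition is_odo_coset (H : G -> Prop) (c : G -> Prop) : Prop := exists a, c = odo_coset H a.
(* the natural map G/H' -> G/H (H' <= H): aH' |-> aH *)
Definition coset_proj (H : G -> Prop) (c : G -> Prop) : G -> Prop :=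
  fun h => exists a, c a /\ H (ginv a ** h).

(* points of the inverse limit X = lim (G/G_k, pi_k) *)
Definition odo_point (Gn : nat -> G -> Prop) (x : nat -> G -> Prop) : Prop :=
  (forall k, is_odo_coset (Gn k) (x k)) /\ (forall k, coset_proj (Gn k) (x k.+1) = x k).

Definition Odo (Gn : nat -> G -> Prop) := {x : nat -> G -> Prop | odo_point Gn x}.

Definition rawact (g : G) (x : nat -> G -> Prop) : nat -> G -> Prop :=
  fun k h => x k (ginv g ** h).

Variable Gn : nat -> G -> Prop.
Local Notation X := (Odo Gn).

Definition free_action : Prop :=
  forall (g : G) (x : X), rawact g (sval x) = sval x -> g = gone G.

(* topology of X: the inverse-limit (product of discrete) topology,
   with basis the cylinders {y | y_k = x_k} *)
Definition is_open (U : X -> Prop) : Prop :=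
  forall x, U x -> exists k, forall y : X, sval y k = sval x k -> U y.
Definition is_clopen (U : X -> Prop) : Prop := is_open U /\ is_open (fun x => ~ U x).
Definition cont_X (s : X -> X) : Prop :=
  forall U, is_open U -> is_open (fun x => U (s x)).
Definition homeo (s : X -> X) : Prop :=
  exists t : X -> X, cancel s t /\ cancel t s /\ cont_X s /\ cont_X t.

Definition in_TFG (s : X -> X) : Prop :=
  homeo s /\
  forall x : X, exists U : X -> Prop, is_clopen U /\ U x /\
    exists g : G, forall y, U y -> sval (s y) = rawact g (sval y).

(* [[G]]_n : f(s, .) is constant on each atom of P_n; the atoms of P_n are
   the sets {x | x_n = c} for c in G/G_n.  "f(s,x) = g" is "g.x = s x". *)
Definition in_TFGn (n : nat) (s : X -> X) : Prop :=
  in_TFG s /\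
  forall x y : X, sval x n = sval y n ->
    forall g : G, rawact g (sval x) = sval (s x) -> rawact g (sval y) = sval (s y).

End Odometer.

(* semidirect product H^p x| S_p, S_p permuting coordinates:
   (h, s)(h', s') = (h . s(h'), s o s')  with (s(h'))_i = h'_(s^-1 i).
   Note: in mathcomp (s * t) x = t (s x), so s o s' is (s' * s)%g. *)
Definition wreath_mem (G : AbsGroup) (H : G -> Prop) (p : nat)
  (w : ('I_p -> G) * {perm 'I_p}) : Prop := forall i, H (w.1 i).

Definition wreath_mul (G : AbsGroup) (p : nat) (w w' : ('I_p -> G) * {perm 'I_p})
  : ('I_p -> G) * {perm 'I_p} :=
  (fun i => gmul (w.1 i) (w'.1 (((w.2)^-1)%g i)), (w'.2 * w.2)%g).
Arguments is_subgrp {G}. Arguments is_normal_sub {G}. Arguments finite_index {G}.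
Arguments is_coset_reps {G}. Arguments odo_coset {G}. Arguments is_odo_coset {G}.
Arguments coset_proj {G}. Arguments odo_point {G}. Arguments Odo {G}. Arguments rawact {G}.
Arguments free_action {G}. Arguments is_open {G Gn}. Arguments is_clopen {G Gn}.
Arguments cont_X {G Gn}. Arguments homeo {G Gn}. Arguments in_TFG {G Gn}.
Arguments in_TFGn {G Gn}. Arguments wreath_mem {G} H {p}. Arguments wreath_mul {G p}.

(* Main.v *)
From Stdlib Require Import ClassicalEpsilon FunctionalExtensionality PropExtensionality ProofIrrelevance Classical.
Require Import Defs.
From mathcomp Require Import all_boot all_fingroup.

Section Grp.
Variable G : AbsGroup.
Local Notation "a ** b" := (gmul a b) (at level 40, left associativity).
Implicit Types a b c : G.

Lemma mulKg a b : ginv a ** (a ** b) = b.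
Proof. by rewrite gmulA gmulVl gmul1l. Qed.
Lemma mulKVg a b : a ** (ginv a ** b) = b.
Proof. by rewrite gmulA gmulVr gmul1l. Qed.
Lemma invgK a : ginv (ginv a) = a.
Proof. by rewrite -[RHS](mulKg (ginv a) a) gmulVl gmul1r. Qed.
Lemma invg_mul a b : ginv (a ** b) = ginv b ** ginv a.
Proof.
have h : (a ** b) ** (ginv b ** ginv a) = gone G.
  by rewrite -gmulA mulKVg gmulVr.
by rewrite -[LHS]gmul1r -h gmulA gmulVl gmul1l.
Qed.
Lemma invg1 : ginv (gone G) = gone G.
Proof. by rewrite -[LHS]gmul1r gmulVl. Qed.
Lemma mulgK a b : a ** b ** ginv b = a.
Proof. by rewrite -gmulA gmulVr gmul1r. Qed.
Lemma mulgKV a b : a ** ginv b ** b = a.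
Proof. by rewrite -gmulA gmulVl gmul1r. Qed.
Lemma gcancel x y a b : x ** a ** y = x ** b ** y -> a = b.
Proof.
move=> h. have := f_equal (fun z => ginv x ** (z ** ginv y)) h.
by rewrite !mulgK !mulKg.
Qed.

Lemma coset_eq (H : G -> Prop) a b : is_subgrp H -> H (ginv a ** b) ->
  odo_coset H a = odo_coset H b.
Proof.
move=> [H1 [HM HV]] hab; apply: functional_extensionality => h.
apply: propositional_extensionality; rewrite /odo_coset; split => hh.
- have := HM _ _ (HV _ hab) hh. by rewrite invg_mul invgK gmulA mulgK.
- have := HM _ _ hab hh. by rewrite gmulA mulgK.
Qed.

Lemma coset_eqE (H : G -> Prop) a b : is_subgrp H ->
  odo_coset H a = odo_coset H b -> H (ginv a ** b).
Proof.
move=> [H1 _] e. have : odo_coset H b b by rewrite /odo_coset gmulVl.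
by rewrite -e.
Qed.

Lemma act_coset (H : G -> Prop) g a :
  (fun h => odo_coset H a (ginv g ** h)) = odo_coset H (g ** a).
Proof.
apply: functional_extensionality => h. by rewrite /odo_coset invg_mul gmulA.
Qed.

Lemma coset_proj_coset (H H' : G -> Prop) a : is_subgrp H -> (forall g, H' g -> H g) ->
  is_subgrp H' -> coset_proj H (odo_coset H' a) = odo_coset H a.
Proof.
move=> [H1 [HM HV]] sub [H1' _].
apply: functional_extensionality => h.
apply: propositional_extensionality; rewrite /coset_proj /odo_coset; split.
- move=> [b [hb hbh]]. have := HM _ _ (sub _ hb) hbh. by rewrite gmulA mulgK.
- move=> hh; exists a; split => //. by rewrite gmulVl.
Qed.
End Grp.
Section Odo.
Variable G : AbsGroup.
Local Notation "a ** b" := (gmul a b) (at level 40, left associativity).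
Variable Gn : nat -> G -> Prop.
Hypothesis Hsub : forall n, is_subgrp (Gn n).
Hypothesis Hdecr : forall n g, Gn n.+1 g -> Gn n g.
Hypothesis Hfree : free_action Gn.
Local Notation X := (Odo Gn).

Lemma rawact_coset g (x : nat -> G -> Prop) k a :
  x k = odo_coset (Gn k) a -> rawact g x k = odo_coset (Gn k) (g ** a).
Proof. by move=> e; rewrite /rawact e act_coset. Qed.

Lemma rawactM (g g' : G) (x : nat -> G -> Prop) : rawact g (rawact g' x) = rawact (g ** g') x.
Proof.
apply: functional_extensionality => k; apply: functional_extensionality => h.
by rewrite /rawact invg_mul gmulA.
Qed.

Lemma rawact1 (x : nat -> G -> Prop) : rawact (gone G) x = x.
Proof.
apply: functional_extensionality => k; apply: functional_extensionality => h.
by rewrite /rawact invg1 gmul1l.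
Qed.

Lemma odo_act (g : G) (x : nat -> G -> Prop) : odo_point Gn x -> odo_point Gn (rawact g x).
Proof.
move=> [Hc Hp]; split.
- move=> k; have [a e] := Hc k; exists (g ** a); exact: rawact_coset.
- move=> k; have [a e] := Hc k.+1.
  rewrite (rawact_coset g _ _ _ e) (@coset_proj_coset _ _ _ _ (Hsub k) (Hdecr k) (Hsub k.+1)).
  symmetry; apply: rawact_coset.
  by rewrite -(Hp k) e (@coset_proj_coset _ _ _ _ (Hsub k) (Hdecr k) (Hsub k.+1)).
Qed.

Definition act g (x : X) : X := exist _ (rawact g (sval x)) (odo_act g (sval x) (svalP x)).

Lemma odo_x0 : odo_point Gn (fun k => odo_coset (Gn k) (gone G)).
Proof.
split; first by move=> k; exists (gone G).
by move=> k; rewrite (@coset_proj_coset _ _ _ _ (Hsub k) (Hdecr k) (Hsub k.+1)).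
Qed.
Definition x0 : X := exist _ _ odo_x0.

Lemma X_eq (x y : X) : sval x = sval y -> x = y.
Proof.
case: x => x px; case: y => y py /= e; subst y.
by rewrite (proof_irrelevance _ px py).
Qed.

Lemma proj_eq (x y : X) k m : k <= m -> sval y m = sval x m -> sval y k = sval x k.
Proof.
move=> /subnK <-; elim: (m - k) => [//|d IH] e.
apply: IH. move: e; rewrite addSn => e.
by rewrite -((proj2 (svalP x)) (d + k)) -((proj2 (svalP y)) (d + k)) e.
Qed.

Lemma free_eq g g' (x : X) : rawact g (sval x) = rawact g' (sval x) -> g = g'.
Proof.
move=> e.
have h : rawact (ginv g' ** g) (sval x) = sval x.
  by rewrite -rawactM e rawactM gmulVl rawact1.
have h1 := Hfree _ _ h.
by rewrite -[g](mulKVg _ g') h1 gmul1r.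
Qed.

Definition good n (s : X -> X) (x : X) :=
  exists g, forall y : X, sval y n = sval x n -> sval (s y) = rawact g (sval y).
Definition AW n s := forall x, good n s x.
Definition bij (s : X -> X) := exists t, cancel s t /\ cancel t s.

Lemma good_mono k m s x : k <= m -> good k s x -> good m s x.
Proof. move=> km [g Hg]; exists g => y e; apply: Hg; exact: proj_eq e. Qed.

Lemma good_local k s x y : sval y k = sval x k -> good k s x -> good k s y.
Proof. move=> e [g Hg]; exists g => z ez; apply: Hg; by rewrite ez e. Qed.

Lemma AW_cont n s : AW n s -> cont_X s.
Proof.
move=> Ha U HU x Ux.
have [k Hk] := HU _ Ux.
have [g Hg] := Ha x.
exists (maxn n k) => y e.
apply: Hk.
have eyn : sval y n = sval x n by apply: proj_eq e; exact: leq_maxl.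
have eyk : sval y k = sval x k by apply: proj_eq e; exact: leq_maxr.
rewrite (Hg _ eyn) (Hg x erefl) /rawact.
by rewrite eyk.
Qed.

Lemma AW_inv n s t : cancel s t -> cancel t s -> AW n s -> AW n t.
Proof.
move=> st ts Ha y.
have [g Hg] := Ha (t y).
exists (ginv g) => y' e.
set x'' := act (ginv g) y'.
have ey : sval y = rawact g (sval (t y)) by rewrite -{1}(ts y); apply: Hg.
have ex : sval x'' n = sval (t y) n.
  have -> : sval x'' n = rawact (ginv g) (sval y) n by rewrite /x'' /= /rawact e.
  by rewrite ey rawactM gmulVl rawact1.
have hs : s x'' = y'.
  apply: X_eq. rewrite (Hg _ ex) /x'' /= rawactM gmulVr rawact1 //.
by have := st x''; rewrite hs => ->.
Qed.

Lemma TFGn_AW n s : in_TFGn n s -> bij s /\ AW n s.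
Proof.
move=> [[[t [st [ts _]]] Hloc] Hn]; split; first by exists t.
move=> x. have [U [_ [Ux [g Hg]]]] := Hloc x.
exists g => y e. symmetry; apply: (Hn x y (esym e)).
by rewrite (Hg _ Ux).
Qed.

Lemma AW_TFGn n s : bij s -> AW n s -> in_TFGn n s.
Proof.
move=> [t [st ts]] Ha; split; first split.
- exists t; do 3!split => //; [exact: (AW_cont n s Ha) | exact: (AW_cont n t (AW_inv n s t st ts Ha))].
- move=> x; exists (fun y => sval y n = sval x n); split; last split => //.
  + split=> y Uy; exists n => z ez; by rewrite ez.
  + have [g Hg] := Ha x; by exists g.
- move=> x y exy g hg.
  have [g0 Hg0] := Ha x.
  have e0 : g = g0 by apply: (free_eq g g0 x); rewrite hg (Hg0 x erefl).
  by rewrite e0 (Hg0 y (esym exy)).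
Qed.

Lemma AW_comp n s t : AW n s -> AW n t -> AW n (fun x => s (t x)).
Proof.
move=> As At x.
have [a Ha] := At x; have [b Hb] := As (t x).
exists (b ** a) => y e.
have e1 : sval (t y) n = sval (t x) n.
  by rewrite (Ha _ e) (Ha x erefl) /rawact e.
by rewrite (Hb _ e1) (Ha _ e) rawactM.
Qed.

Lemma bij_comp s t : bij s -> bij t -> bij (fun x => s (t x)).
Proof.
move=> [s' [h1 h2]] [t' [h3 h4]]; exists (fun x => t' (s' x)); split => x.
- by rewrite h1 h3.
- by rewrite h4 h2.
Qed.

Lemma AW_succ n s : AW n s -> AW n.+1 s.
Proof. move=> A x; apply: good_mono (A x); exact: leqnSn. Qed.

End Odo.
Arguments good {G Gn}. Arguments AW {G Gn}. Arguments bij {G Gn}.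
Lemma pigeon (T : finType) (P : T -> nat -> Prop) :
  (forall i m m', m <= m' -> P i m' -> P i m) ->
  (forall m, exists i, P i m) -> exists i, forall m, P i m.
Proof.
move=> anti all.
apply: NNPP => hn.
have hb : forall i, exists m, ~ P i m.
  move=> i; apply: NNPP => h; apply: hn; exists i => m.
  by apply: NNPP => hm; apply: h; exists m.
have : forall l : seq T, exists M, forall i, i \in l -> exists m, m <= M /\ ~ P i m.
  elim=> [|a l [M HM]]; first by exists 0.
  have [ma Hma] := hb a.
  exists (maxn ma M) => i; rewrite inE => /orP [/eqP ->|il].
  - by exists ma; split => //; exact: leq_maxl.
  - have [m [hm1 hm2]] := HM i il; exists m; split => //.
    exact: leq_trans hm1 (leq_maxr _ _).
move=> /(_ (enum T)) [M HM].
have [i Hi] := all M.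
have [m [hm1 hm2]] := HM i (mem_enum _ i).
by apply: hm2; apply: anti hm1 Hi.
Qed.

Section Compact.
Variable G : AbsGroup.
Local Notation "a ** b" := (gmul a b) (at level 40, left associativity).
Variable Gn : nat -> G -> Prop.
Hypothesis Hsub : forall n, is_subgrp (Gn n).
Hypothesis Hdecr : forall n g, Gn n.+1 g -> Gn n g.
Hypothesis Hfin : forall n, finite_index (Gn n).
Local Notation X := (Odo Gn).

Lemma coset_idx k p (e : 'I_p -> G) (He : is_coset_reps (Gn k) p e) (x : X) :
  exists i, sval x k = odo_coset (Gn k) (e i).
Proof.
have [a ea] := (proj1 (svalP x)) k.
have [i Hi] := (proj1 He) a.
by exists i; rewrite ea; symmetry; apply: coset_eq.
Qed.

Lemma TFG_AW (s : X -> X) : in_TFG s -> exists n, AW n s.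
Proof.
move=> [_ Hloc].
have Hgood : forall x, exists k, good k s x.
  move=> x; have [U [[HU _] [Ux [g Hg]]]] := Hloc x.
  have [k Hk] := HU x Ux.
  by exists k, g => y e; apply: Hg; apply: Hk.
apply: NNPP => hn.
have bad : forall m, exists x, ~ good m s x.
  move=> m; apply: NNPP => h; apply: hn; exists m => x.
  by apply: NNPP => hx; apply: h; exists x.
pose IB k c := forall m, exists x : X, sval x k = c /\ ~ good m s x.
have anti : forall m m' x, m <= m' -> ~ good m' s x -> ~ good m s x.
  by move=> m m' x le h g; apply: h; exact: (good_mono _ _ _ _ _ _ le g).
have IB0 : exists c, IB 0 c /\ is_odo_coset (Gn 0) c.
  have [p [e He]] := Hfin 0.
  have [i Hi] : exists i, forall m, exists x : X,
      sval x 0 = odo_coset (Gn 0) (e i) /\ ~ good m s x.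
    apply: pigeon.
      move=> i m m' le [x [h1 h2]]; exists x; split => //; exact: anti le h2.
    move=> m; have [x hx] := bad m; have [i hi] := coset_idx _ _ _ He x.
    by exists i, x.
  by exists (odo_coset (Gn 0) (e i)); split => //; exists (e i).
have IBS : forall k c, IB k c -> exists c', (IB k.+1 c' /\ is_odo_coset (Gn k.+1) c')
    /\ coset_proj (Gn k) c' = c.
  move=> k c hc.
  have [p [e He]] := Hfin k.+1.
  have [i Hi] : exists i, forall m, exists x : X, (sval x k = c /\
      sval x k.+1 = odo_coset (Gn k.+1) (e i)) /\ ~ good m s x.
    apply: pigeon.
      move=> i m m' le [x [h1 h2]]; exists x; split => //; exact: anti le h2.
    move=> m; have [x [hx1 hx2]] := hc m; have [i hi] := coset_idx _ _ _ He x.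
    by exists i, x.
  exists (odo_coset (Gn k.+1) (e i)); split; last first.
    have [x [[h1 h2] _]] := Hi 0.
    by rewrite -h2 ((proj2 (svalP x)) k).
  split; last by exists (e i).
  by move=> m; have [x [[_ h2] h3]] := Hi m; exists x.
have c0 := constructive_indefinite_description _ IB0.
pose step := fun k (c : {c | IB k c /\ is_odo_coset (Gn k) c}) =>
  (exist (fun c' => IB k.+1 c' /\ is_odo_coset (Gn k.+1) c') _ (proj1 (proj2_sig (constructive_indefinite_description _ (IBS k _ (proj1 (proj2_sig c))))))).
pose chain := nat_rect (fun k => {c | IB k c /\ is_odo_coset (Gn k) c}) c0 step.
have chainS : forall k, coset_proj (Gn k) (sval (chain k.+1)) = sval (chain k).
  move=> k /=.
  exact: (proj2 (proj2_sig (constructive_indefinite_description _ (IBS k _ (proj1 (proj2_sig (chain k))))))).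
have pt : odo_point Gn (fun k => sval (chain k)).
  by split => k; [exact: (proj2 (proj2_sig (chain k))) | exact: chainS].
pose xs : X := exist _ _ pt.
have [k gk] := Hgood xs.
have [y [ey ny]] := (proj1 (proj2_sig (chain k))) k.
by apply: ny; exact: (good_local _ _ _ _ xs y ey gk).
Qed.
End Compact.
Section Phi.
Variable G : AbsGroup.
Local Notation "a ** b" := (gmul a b) (at level 40, left associativity).
Variable Gn : nat -> G -> Prop.
Hypothesis Hsub : forall n, is_subgrp (Gn n).
Hypothesis Hdecr : forall n g, Gn n.+1 g -> Gn n g.
Hypothesis Hfree : free_action Gn.
Local Notation X := (Odo Gn).
Local Notation actg := (act G Gn Hsub Hdecr).
Variables (n p : nat) (e : 'I_p -> G).
Hypothesis He : is_coset_reps (Gn n) p e.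

Definition idx (x : X) : 'I_p :=
  proj1_sig (constructive_indefinite_description _ (coset_idx G Gn Hsub n p e He x)).
Lemma idx_spec x : sval x n = odo_coset (Gn n) (e (idx x)).
Proof. exact: (proj2_sig (constructive_indefinite_description _ (coset_idx G Gn Hsub n p e He x))). Qed.
Lemma coset_inj i j : odo_coset (Gn n) (e i) = odo_coset (Gn n) (e j) -> i = j.
Proof. by move=> h; apply: (proj2 He); apply: coset_eqE. Qed.
Lemma idx_uniq x i : sval x n = odo_coset (Gn n) (e i) -> idx x = i.
Proof. by move=> h; apply: coset_inj; rewrite -idx_spec. Qed.

Definition xi i : X := actg (e i) (x0 G Gn Hsub Hdecr).
Lemma xi_n i : sval (xi i) n = odo_coset (Gn n) (e i).
Proof.
rewrite /xi /= (rawact_coset G Gn (e i) _ n (gone G)) ?gmul1r //.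
Qed.
Lemma idx_xi i : idx (xi i) = i.
Proof. exact: idx_uniq (xi_n i). Qed.

Definition mkperm (f : 'I_p -> 'I_p) : {perm 'I_p} :=
  match excluded_middle_informative (injective f) with
  | left H => perm H
  | right _ => 1%g
  end.
Lemma mkpermE f : injective f -> mkperm f =1 f.
Proof.
move=> inj i; rewrite /mkperm; case: excluded_middle_informative => // H.
by rewrite permE.
Qed.

Definition gs (s : X -> X) i : G :=
  epsilon (inhabits (gone G)) (fun g => sval (s (xi i)) = rawact g (sval (xi i))).
Definition sig_s (s : X -> X) i : 'I_p := idx (s (xi i)).
Definition phi (s : X -> X) : ('I_p -> G) * {perm 'I_p} :=
  let sg := mkperm (sig_s s) in
  (fun i => ginv (e i) ** gs s ((sg^-1)%g i) ** e ((sg^-1)%g i), sg).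

Lemma gs_eq s i g : sval (s (xi i)) = rawact g (sval (xi i)) -> gs s i = g.
Proof.
move=> h.
have := epsilon_spec (inhabits (gone G)) (fun g => sval (s (xi i)) = rawact g (sval (xi i))) (ex_intro _ g h).
rewrite -/(gs s i) h => h'.
exact: (free_eq G Gn Hfree _ _ (xi i) (esym h')).
Qed.

Section TFG.
Variable s : X -> X.
Hypothesis Bs : bij s.
Hypothesis As : AW n s.

Lemma L1 i y : sval y n = odo_coset (Gn n) (e i) -> sval (s y) = rawact (gs s i) (sval y).
Proof.
move=> hy.
have [g0 Hg0] := As (xi i).
have -> : gs s i = g0 by apply: gs_eq; apply: Hg0.
by apply: Hg0; rewrite hy xi_n.
Qed.

Lemma L2 i y : sval y n = odo_coset (Gn n) (e i) ->
  sval (s y) n = odo_coset (Gn n) (gs s i ** e i).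
Proof. move=> hy; rewrite (L1 _ _ hy); exact: rawact_coset. Qed.

Lemma L3 i : odo_coset (Gn n) (gs s i ** e i) = odo_coset (Gn n) (e (sig_s s i)).
Proof. by rewrite -(L2 _ _ (xi_n i)) idx_spec. Qed.

Lemma L4 : injective (sig_s s).
Proof.
move=> i i' h.
have [t [st ts]] := Bs.
set g := gs s i; set g' := gs s i'.
set z := actg (ginv g ** g') (xi i').
have hz : sval z n = odo_coset (Gn n) (e i).
  rewrite /z /= (rawact_coset G Gn _ _ n (e i') (xi_n i')).
  apply: coset_eq => //.
  have h1 := coset_eqE _ _ _ _ (Hsub n) (etrans (L3 i) (etrans (f_equal _ (f_equal e h)) (esym (L3 i')))).
  have := (proj2 (proj2 (Hsub n))) _ h1.
  by rewrite !invg_mul !invgK !gmulA.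
have hsz : s z = s (xi i').
  apply: X_eq; rewrite (L1 _ _ hz) (L1 _ _ (xi_n i')) /z /= rawactM.
  by rewrite mulKVg.
have : z = xi i' by rewrite -(st z) hsz st.
move=> ez; apply: coset_inj; by rewrite -hz ez xi_n.
Qed.

Lemma L5 : mkperm (sig_s s) =1 sig_s s.
Proof. exact: mkpermE L4. Qed.

Lemma L6 i : Gn n (ginv (e (sig_s s i)) ** (gs s i ** e i)).
Proof. by apply: coset_eqE => //; rewrite L3. Qed.

End TFG.

Lemma galg (x y z w v : G) : x ** (y ** w) ** v = (x ** y ** z) ** (ginv z ** w ** v).
Proof. by rewrite !gmulA mulgK. Qed.

Section Comp.
Variables s t : X -> X.
Hypotheses (Bs : bij s) (As : AW n s) (Bt : bij t) (At : AW n t).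

Lemma sig_comp j : sig_s (fun x => s (t x)) j = sig_s s (sig_s t j).
Proof.
apply: idx_uniq.
rewrite (L2 s As _ _ (idx_spec (t (xi j)))).
exact: L3.
Qed.

Lemma gs_comp j : gs (fun x => s (t x)) j = gs s (sig_s t j) ** gs t j.
Proof.
apply: gs_eq.
by rewrite (L1 s As _ _ (idx_spec (t (xi j)))) (L1 t At _ _ (xi_n j)) rawactM.
Qed.

Lemma phi_comp : phi (fun x => s (t x)) = wreath_mul (phi s) (phi t).
Proof.
have Es := L5 s Bs As; have Et := L5 t Bt At.
have Est := L5 _ (bij_comp _ _ _ _ Bs Bt) (AW_comp _ _ _ _ _ As At).
have Pst : mkperm (sig_s (fun x => s (t x))) = (mkperm (sig_s t) * mkperm (sig_s s))%g.
  by apply/permP => j; rewrite permM Est sig_comp Es Et.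
rewrite /phi /wreath_mul /= Pst; congr pair; apply: functional_extensionality => i.
rewrite invMg permM gs_comp -Et permKV.
exact: galg.
Qed.
End Comp.

Lemma phi_inj s t : bij s -> AW n s -> bij t -> AW n t -> phi s = phi t -> s = t.
Proof.
move=> Bs As Bt At E.
have Pe : mkperm (sig_s s) = mkperm (sig_s t) by have := f_equal snd E.
have Hf := f_equal fst E.
have Eg : forall j, gs s j = gs t j.
  move=> j.
  have := f_equal (fun f => f (mkperm (sig_s s) j)) Hf.
  rewrite /phi /= -Pe permK.
  exact: gcancel.
apply: functional_extensionality => x; apply: X_eq.
by rewrite (L1 s As _ _ (idx_spec x)) (L1 t At _ _ (idx_spec x)) Eg.
Qed.

Lemma phi_perm s i x : bij s -> AW n s -> sval x n = odo_coset (Gn n) (e i) ->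
  sval (s x) n = odo_coset (Gn n) (e ((phi s).2 i)).
Proof.
move=> Bs As hx; rewrite /= (L5 s Bs As) -L3 //.
exact: L2.
Qed.

Lemma phi_mem s : bij s -> AW n s -> wreath_mem (Gn n) (phi s).
Proof.
move=> Bs As i; rewrite /phi /=.
set j := ((mkperm (sig_s s))^-1)%g i.
have := L6 s As j.
by rewrite -(L5 s Bs As) /j permKV gmulA.
Qed.

Section Surj.
Variable w : ('I_p -> G) * {perm 'I_p}.
Hypothesis Hw : wreath_mem (Gn n) w.
Let h := w.1.
Let pi := w.2.
Definition gw j := e (pi j) ** h (pi j) ** ginv (e j).
Lemma gw_e j : gw j ** e j = e (pi j) ** h (pi j).
Proof. by rewrite /gw mulgKV. Qed.
Definition sw (x : X) : X := actg (gw (idx x)) x.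
Definition tw (x : X) : X := actg (ginv (gw ((pi^-1)%g (idx x)))) x.

Lemma idx_sw x : idx (sw x) = pi (idx x).
Proof.
apply: idx_uniq.
rewrite /sw /= (rawact_coset G Gn _ _ n _ (idx_spec x)) gw_e.
apply: coset_eq => //.
rewrite invg_mul mulgKV; apply: (proj2 (proj2 (Hsub n))); exact: Hw.
Qed.

Lemma idx_tw x : idx (tw x) = (pi^-1)%g (idx x).
Proof.
apply: idx_uniq.
rewrite /tw /= (rawact_coset G Gn _ _ n _ (idx_spec x)).
apply: coset_eq => //.
rewrite invg_mul invgK -gmulA gw_e.
rewrite -{1}(permKV pi (idx x)) mulKg; exact: Hw.
Qed.

Lemma sw_bij : bij sw.
Proof.
exists tw; split => x; apply: X_eq.
- by rewrite /tw /= idx_sw permK /sw /= rawactM gmulVl rawact1.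
- by rewrite /sw /= idx_tw /tw /= rawactM gmulVr rawact1.
Qed.

Lemma sw_AW : AW n sw.
Proof.
move=> x; exists (gw (idx x)) => y ey.
rewrite /sw /=; have -> : idx y = idx x by apply: idx_uniq; rewrite ey idx_spec.
by [].
Qed.

Lemma phi_sw : phi sw = w.
Proof.
have Ss : forall i, sig_s sw i = pi i by move=> i; rewrite /sig_s idx_sw idx_xi.
have Pm : mkperm (sig_s sw) = pi.
  apply/permP => i; rewrite mkpermE ?Ss //.
  by move=> a b; rewrite !Ss; apply: perm_inj.
have Gs : forall i, gs sw i = gw i.
  by move=> i; apply: gs_eq; rewrite /sw /= idx_xi.
rewrite /phi /= Pm [RHS]surjective_pairing.
congr pair; apply: functional_extensionality => i.
rewrite Gs /gw permKV.
by rewrite !gmulA gmulVl gmul1l mulgKV.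
Qed.
End Surj.
End Phi.
Theorem proposition4p5 (G : AbsGroup) (Gn : nat -> G -> Prop)
  (Hsub : forall n, is_subgrp (Gn n))
  (Hnormal : forall n, is_normal_sub (Gn n))
  (Hfin : forall n, finite_index (Gn n))
  (Hdecr : forall n g, Gn n.+1 g -> Gn n g)
  (Hfree : free_action Gn) :
  (* (1) [[G]]_n ~= G_n^[G:G_n] x| S_[G:G_n] *)
  (forall (n p : nat) (e : 'I_p -> G), is_coset_reps (Gn n) p e ->
     exists phi : (Odo Gn -> Odo Gn) -> ('I_p -> G) * {perm 'I_p},
       (forall s t : Odo Gn -> Odo Gn, in_TFGn n s -> in_TFGn n t -> in_TFGn n (fun x => s (t x))) /\
       (forall s : Odo Gn -> Odo Gn, in_TFGn n s -> wreath_mem (Gn n) (phi s)) /\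
       (forall s t : Odo Gn -> Odo Gn, in_TFGn n s -> in_TFGn n t ->
          phi (fun x => s (t x)) = wreath_mul (phi s) (phi t)) /\
       (forall s t : Odo Gn -> Odo Gn, in_TFGn n s -> in_TFGn n t -> phi s = phi t -> s = t) /\
       (forall w, wreath_mem (Gn n) w -> exists s, in_TFGn n s /\ phi s = w) /\
       (* the S_p-component is the permutation of the atoms e_i C_n *)
       (forall s : Odo Gn -> Odo Gn, in_TFGn n s -> forall (i : 'I_p) (x : Odo Gn),
          sval x n = odo_coset (Gn n) (e i) ->
          sval (s x) n = odo_coset (Gn n) (e ((phi s).2 i)))) /\
  (* (2) [[G]] is the increasing union of the [[G]]_n *)
  (forall n (s : Odo Gn -> Odo Gn), in_TFGn n s -> in_TFGn n.+1 s) /\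
  (forall s : Odo Gn -> Odo Gn, in_TFG s -> exists n, in_TFGn n s).
Proof.
split; last split.
- move=> n p e He.
  exists (phi G Gn Hsub Hdecr n p e He).
  split; last split; last split; last split; last split.
  + move=> s t /TFGn_AW [Bs As] /TFGn_AW [Bt At].
    apply: (AW_TFGn G Gn Hsub Hdecr Hfree); [exact: bij_comp | exact: AW_comp].
  + move=> s /TFGn_AW [Bs As]; exact: (phi_mem G Gn Hsub Hdecr Hfree).
  + move=> s t /TFGn_AW [Bs As] /TFGn_AW [Bt At].
    exact: (phi_comp G Gn Hsub Hdecr Hfree).
  + move=> s t /TFGn_AW [Bs As] /TFGn_AW [Bt At].
    exact: (phi_inj G Gn Hsub Hdecr Hfree).
  + move=> w Hw.
    exists (sw G Gn Hsub Hdecr n p e He w); split.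
    * apply: (AW_TFGn G Gn Hsub Hdecr Hfree).
      -- exact: (sw_bij G Gn Hsub Hdecr n p e He w Hw).
      -- exact: (sw_AW G Gn Hsub Hdecr n p e He w).
    * exact: (phi_sw G Gn Hsub Hdecr Hfree n p e He w Hw).
  + move=> s /TFGn_AW [Bs As] i x hx.
    exact: (phi_perm G Gn Hsub Hdecr Hfree).
- move=> n s /TFGn_AW [Bs As].
  apply: (AW_TFGn G Gn Hsub Hdecr Hfree) => //; exact: AW_succ.
- move=> s Hs.
  have [_ [[t [st [ts _]]] _]] : True /\ in_TFG s by [].
  have [n An] := TFG_AW G Gn Hsub Hfin s Hs.
  exists n; apply: (AW_TFGn G Gn Hsub Hdecr Hfree) => //.
  by exists t.
Qed.
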